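(* Let $(X,d)$ be a finite pseudometric space and let $A\subseteq X$ be a nonempty proper subset such that $d(i,j)=0$ for all $i,j\in A$. Let $\sigma:=A\,|\,A^c$. Then for every $\alpha_\sigma\ge0$, $$\operatorname{LIP}(X,d+\alpha_\sigma\delta_\sigma)=\operatorname{LIP}(X,d)+\alpha_\sigma S_\sigma .$$
   Context: Let $X$ be a finite set, $n:=|X|$, $\{\mathbbm 1_k\}_{k\in X}$ the standard basis of $\mathbb R^X$, and $\mathbbm 1_A:=\sum_{x\in A}\mathbbm 1_x$. A split of $X$ is an unordered pair of nonempty disjoint subsets $A,B$ with $A\cup B=X$, written $A|B$. For a split $\sigma=A|B$, $\delta_\sigma(i,j)=0$ if $i,j$ lie in the same side and $1$ otherwise, and $S_\sigma:=\operatorname{conv}\{\tfrac{|B|}{n}\mathbbm 1_A-\tfrac{|A|}{n}\mathbbm 1_B,\ \tfrac{|A|}{n}\mathbbm 1_B-\tfrac{|B|}{n}\mathbbm 1_A\}\subseteq\mathbb R^X$; $cS_\sigma$ denotes its scaling by $c\ge 0$, and $+$ is Minkowski sum. For a pseudometric $d$ on $X$ (symmetric, nonnegative, $d(x,x)=0$, triangle inequality; distinct points may have distance 0), $\operatorname{LIP}(X,d):=\{x\in\mathbb R^X\mid\sum_i x_i=0,\ x_i-x_j\le d(i,j)\ \forall i,j\in X\}$. *)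

(* Defs.v *)
(* X is a finite type T, R^X is T -> R for an arbitrary
   real field R (the statement is purely order-algebraic). *)
From HB Require Import structures.
From mathcomp Require Import all_boot all_order all_algebra.
Set Implicit Arguments. Unset Strict Implicit. Unset Printing Implicit Defensive.
Import Order.TTheory GRing.Theory Num.Theory.
Local Open Scope ring_scope.

Section Defs.
Variables (R : realFieldType) (T : finType).

Definition pseudometric (d : T -> T -> R) : Prop :=
  [/\ forall i j, d i j = d j i,
      forall i j, 0 <= d i j,
      forall i, d i i = 0
    & forall i j k, d i k <= d i j + d j k].

Definition indic (B : {set T}) : T -> R := fun k => if k \in B then 1 else 0.

Definition split_delta (A : {set T}) (i j : T) : R :=
  if (i \in A) == (j \in A) then 0 else 1.

Definition LIP (d : T -> T -> R) (x : T -> R) : Prop :=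
  \sum_(i : T) x i = 0 /\ forall i j, x i - x j <= d i j.

Definition split_vertex (A : {set T}) : T -> R :=
  fun k => (#|~: A|%:R / #|T|%:R) * indic A k - (#|A|%:R / #|T|%:R) * indic (~: A) k.

(* S_sigma = conv {v, -v}, where the other vertex |A|/n 1_B - |B|/n 1_A = -v *)
Definition split_polytope (A : {set T}) (x : T -> R) : Prop :=
  exists2 t : R, 0 <= t <= 1 &
    forall k, x k = t * split_vertex A k + (1 - t) * (- split_vertex A k).

Definition scale_set (c : R) (P : (T -> R) -> Prop) (x : T -> R) : Prop :=
  exists2 y, P y & forall k, x k = c * y k.

Definition mink_sum (P Q : (T -> R) -> Prop) (x : T -> R) : Prop :=
  exists y z, [/\ P y, Q z & forall k, x k = y k + z k].

End Defs.

Arguments indic {R T} B k.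
Arguments split_delta {R T} A i j.
Arguments split_vertex {R T} A k.
Arguments split_polytope {R T} A x.
Arguments LIP {R T} d x.
Arguments scale_set {R T} c P x.
Arguments mink_sum {R T} P Q x.
Arguments pseudometric {R T} d.

(* Main.v *)
Require Import Defs.
From HB Require Import structures.
From mathcomp Require Import all_boot all_order all_algebra.
From mathcomp Require Import ring lra.
Import Order.TTheory GRing.Theory Num.Theory.
Local Open Scope ring_scope.

Section Aux.
Variables (R : realFieldType) (T : finType) (A : {set T}).

Lemma vA k : k \in A -> split_vertex (R:=R) A k = #|~: A|%:R / #|T|%:R.
Proof. by move=> kA; rewrite /split_vertex /indic kA inE kA /=; lra. Qed.

Lemma vB k : k \notin A -> split_vertex (R:=R) A k = - (#|A|%:R / #|T|%:R).
Proof. by move=> kA; rewrite /split_vertex /indic (negbTE kA) inE kA /=; lra. Qed.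

Lemma sum_indic (B : {set T}) : \sum_k indic (R:=R) B k = #|B|%:R.
Proof.
rewrite /indic -big_mkcond /= sumr_const; by rewrite -[#|_|]/(#|[pred k in B]|).
Qed.

Lemma sum_v : \sum_k split_vertex (R:=R) A k = 0.
Proof.
rewrite /split_vertex big_split /= -!mulr_sumr sumrN -mulr_sumr !sum_indic.
ring.
Qed.

Lemma vdiff i j : A != set0 -> i \in A -> j \notin A ->
  split_vertex (R:=R) A i - split_vertex A j = 1.
Proof.
move=> A0 iA jA; rewrite vA // vB // opprK -mulrDl -natrD addnC cardsC.
rewrite divff // pnatr_eq0 -lt0n; apply/card_gt0P; exists i; done.
Qed.

End Aux.
Arguments vA {R T A}.
Arguments vB {R T A}.
Arguments sum_v {R T A}.
Arguments vdiff {R T A}.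

Theorem mainTheorem3 (R : realFieldType) (T : finType) (d : T -> T -> R)
    (A : {set T}) (alpha : R) :
  pseudometric d ->
  A != set0 -> A != [set: T] ->
  (forall i j, i \in A -> j \in A -> d i j = 0) ->
  0 <= alpha ->
  forall x : T -> R,
    LIP (fun i j => d i j + alpha * split_delta A i j) x <->
    mink_sum (LIP d) (scale_set alpha (split_polytope A)) x.
Proof.
move=> [dsym dge0 d0 dtri] A0 AT dA ha x.
have sdE i j : split_delta (R:=R) A i j = if (i \in A) == (j \in A) then 0 else 1 by [].
have vdiff' i j : i \in A -> j \notin A ->
  split_vertex (R:=R) A j - split_vertex A i = -1.
  by move=> iA jA; have := vdiff (R:=R) i j A0 iA jA; lra.
have vsame i j : (i \in A) = (j \in A) -> split_vertex (R:=R) A i - split_vertex A j = 0.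
  move=> e; case iA: (i \in A); move: e; rewrite iA => e.
    by rewrite !vA // subrr.
  by rewrite !vB ?iA -?e // subrr.
split.
- move=> [sx Lx].
  pose P := fun p : T * T => (p.1 \in A) && (p.2 \notin A).
  pose c := \big[Order.max/ - alpha]_(p | P p) (x p.1 - x p.2 - d p.1 p.2).
  have cge : - alpha <= c by apply: bigmax_ge_id.
  have cterm i j : i \in A -> j \notin A -> x i - x j - d i j <= c.
    move=> iA jA; exact: (@le_bigmax_cond _ _ _ _ (i, j) P (fun p : T * T => x p.1 - x p.2 - d p.1 p.2)) (introT andP (conj iA jA)).
  have cle : c <= alpha.
    apply: bigmax_le; first lra.
    move=> [i j] /andP [/= iA jA]; have := Lx i j; rewrite sdE iA (negbTE jA) /=; lra.
  have cup i j : i \in A -> j \notin A -> c <= x i - x j + d i j.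
    move=> iA jA; apply: bigmax_le.
      have := Lx j i; rewrite sdE iA (negbTE jA) /= dsym; lra.
    move=> [p q] /andP [/= pA qA].
    have h1 := Lx p i; rewrite sdE pA iA /= dA // in h1.
    have h2 := Lx j q; rewrite sdE (negbTE jA) (negbTE qA) /= in h2.
    have h3 := dtri j i q; have h4 := dtri i p q.
    have e1 : d i p = 0 by apply: dA.
    rewrite e1 in h4; rewrite (dsym j i) in h3; lra.
  pose s := if alpha == 0 then 0 else c / alpha.
  have hs : alpha * s = c.
    rewrite /s; case: eqP => [a0|/eqP an0]; last by rewrite mulrC divfK.
    by rewrite a0 mulr0; apply/eqP; rewrite eq_le; apply/andP; split; lra.
  have s1 : -1 <= s <= 1.
    rewrite /s; case: eqP => [_|/eqP an0]; first by lra.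
    have ap : 0 < alpha by rewrite lt_def an0.
    by rewrite ler_pdivrMr // ler_pdivlMr //; apply/andP; split; lra.
  exists (fun k => x k - c * split_vertex A k), (fun k => alpha * (s * split_vertex A k)).
  split.
  + split.
      by rewrite big_split /= sx sumrN -mulr_sumr sum_v mulr0 subr0.
    move=> i j.
    have e : x i - c * split_vertex A i - (x j - c * split_vertex A j) =
             x i - x j - c * (split_vertex A i - split_vertex A j) by ring.
    rewrite e; have := Lx i j; rewrite sdE.
    case iA: (i \in A); case jA: (j \in A) => /=.
    * by rewrite vsame ?iA ?jA //; lra.
    * by rewrite (vdiff _ _ A0) ?iA ?jA //; have := cterm i j; rewrite iA jA; lra.
    * rewrite -opprB vdiff' ?iA ?jA // => _.
      have := cup j i; rewrite iA jA (dsym j i) => h; have := h erefl erefl; lra.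
    * by rewrite vsame ?iA ?jA //; lra.
  + exists (fun k => s * split_vertex A k) => //.
    exists ((s + 1) / 2); first by apply/andP; split; lra.
    by move=> k; field.
  + by move=> k; rewrite mulrA hs; ring.
- move=> [y [z [[sy Ly] [w [t t01 hw] hz] hx]]].
  have hx' k : x k = y k + alpha * ((2 * t - 1) * split_vertex A k).
    by rewrite hx hz hw; ring.
  split.
    rewrite (eq_bigr _ (fun k _ => hx' k)) big_split /= sy -mulr_sumr -mulr_sumr sum_v.
    by rewrite !mulr0 addr0.
  move=> i j; rewrite !hx'.
  have e : y i + alpha * ((2 * t - 1) * split_vertex A i) -
           (y j + alpha * ((2 * t - 1) * split_vertex A j)) =
           y i - y j + alpha * (2 * t - 1) * (split_vertex A i - split_vertex A j) by ring.
  rewrite e sdE; have := Ly i j; move/andP: t01 => [t0 t1].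
  have h1 := mulr_ge0 ha t0; have h2 : 0 <= alpha * (1 - t) by apply: mulr_ge0; lra.
  case iA: (i \in A); case jA: (j \in A) => /=.
  * by rewrite vsame ?iA ?jA //; lra.
  * by rewrite (vdiff _ _ A0) ?iA ?jA //; lra.
  * by rewrite -opprB vdiff' ?iA ?jA //; lra.
  * by rewrite vsame ?iA ?jA //; lra.
Qed.
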